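(* Let $S=K[x_1,\dots,x_n]$ with $K$ a field or $\mathbb{Z}$, let $I\subseteq S$ be a monomial ideal, and let $C_\bullet$ be a minimal free resolution of $S/I$ whose free modules are given $\mathbb{N}^n$-homogeneous bases (so all matrices are $\mathbb{N}^n$-graded). If $Z$ is a subset of the variables and $T=S/(Z)$, then the pruning $P(C_\bullet,Z)$ is a minimal free resolution of $S/I\otimes_S T$ as a $T$-module.
   Context: Pruning. Let $C_\bullet$ be a sequence of free $S$-modules with chosen bases $F_t\xrightarrow{A_t}F_{t-1}\to\cdots\to F_1\xrightarrow{A_1}F_0$, so each map is a matrix $A_i$ (columns indexed by the basis of $F_i$, rows by the basis of $F_{i-1}$). The pruning $P(C_\bullet,Z)$ is obtained by the following procedure: for $i=1,2,\dots,t$ in turn, replace the current matrix $A_i$ by the matrix obtained by setting every variable of $Z$ equal to $0$; let $U$ be the set of columns of this new $A_i$ that are identically zero; then delete from $F_i$ the basis elements indexed by $U$, delete from $A_i$ the columns indexed by $U$, and delete from $A_{i+1}$ (if $i<t$) the rows indexed by $U$. The resulting sequence of matrices and (shrunken) free modules is regarded as a sequence of free $T$-modules and maps, $T=S/(Z)$. *)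

(* Defs.v *)
From HB Require Import structures.
From mathcomp Require Import all_boot all_algebra.
From mathcomp Require Import mpoly.
Set Implicit Arguments. Unset Strict Implicit. Unset Printing Implicit Defensive.
Import GRing.Theory.
Local Open Scope ring_scope.

Section Pruning.
Variables (R : comNzRingType) (n : nat).
Local Notation S := {mpoly R[n]}.

Definition zsub (Z : {set 'I_n}) (p : S) : S :=
  comp_mpoly [tuple (if i \in Z then 0 else 'X_i : S) | i < n] p.

Definition monomial_ideal (k : nat) (g : 'I_k -> 'X_{1..n}) (p : S) : Prop :=
  exists q : 'I_k -> S, p = \sum_(j < k) q j * 'X_[g j].

Definition supported (m : nat) (E : {set 'I_m}) (P : S -> Prop)
  (v : 'cV[S]_m) : Prop :=
  forall j, P (v j 0) /\ (j \notin E -> v j 0 = 0).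

(* [is_min_free_res P J t r E A]: the sequence
     F_t --A t--> ... --A 1--> F_0 (--> P/J --> 0)
   of free P-modules, F_i having basis indexed by E i (a subset of 'I_(r i)),
   is a minimal free resolution of the cyclic P-module P/J; here P is the
   coefficient ring (a subring of S containing all entries), J an ideal of P.
   A i is an (r (i-1)) x (r i) matrix (columns = basis of F_i). *)
Definition is_min_free_res (P J : S -> Prop) (t : nat) (r : nat -> nat)
  (E : forall i, {set 'I_(r i)}) (A : forall i, 'M[S]_(r i.-1, r i)) : Prop :=
  [/\ [/\ r 0 = 1%N, E 0 = setT & r t.+1 = 0%N],
   (forall i, (1 <= i <= t)%N -> forall a b,
       P (A i a b) /\ ((a \notin E i.-1) || (b \notin E i) -> A i a b = 0)),
   (forall i, (1 <= i <= t)%N -> A i *m A i.+1 = 0),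
   ((* exactness at F_0: the image of F_1 in F_0 = P is exactly J *)
   (forall p, P p -> (J p <-> exists v, supported (E 1%N) P v /\
                                 forall a, (A 1%N *m v) a 0 = p)) /\
   (* exactness at F_i, 1 <= i <= t (at i = t: injectivity, as F_(t+1) = 0) *)
   (forall i, (1 <= i <= t)%N -> forall v, supported (E i) P v ->
       A i *m v = 0 -> exists w, supported (E i.+1) P w /\ A i.+1 *m w = v)) &
   (* minimality: all entries lie in the ideal (x_1, ..., x_n) *)
   (forall i, (1 <= i <= t)%N -> forall a b, (A i a b)@_0%MM = 0)].

Definition multigraded (t : nat) (r : nat -> nat)
  (deg : forall i, 'I_(r i) -> 'X_{1..n}) (A : forall i, 'M[S]_(r i.-1, r i))
  : Prop :=
  forall i, (1 <= i <= t)%N -> forall a b,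
    A i a b = 0 \/ exists (c : R) (m : 'X_{1..n}),
      A i a b = c *: 'X_[m] /\ (m + deg i.-1 a)%MM = deg i b.

(* Deleting basis elements is recorded by the set of basis elements
   still kept: kept 0 = everything; at step i the column c of (A i with the
   rows deleted at step i-1, Z-variables set to 0) is kept iff it is nonzero. *)
Fixpoint kept (Z : {set 'I_n}) (r : nat -> nat)
  (A : forall i, 'M[S]_(r i.-1, r i)) (i : nat) : {set 'I_(r i)} :=
  match i return {set 'I_(r i)} with
  | 0 => setT
  | j.+1 => [set c : 'I_(r j.+1) |
             [exists a : 'I_(r j), (a \in kept Z A j) &&
                                   (zsub Z (A j.+1 a c) != 0)]]
  end.

Definition pruned (Z : {set 'I_n}) (r : nat -> nat)
  (A : forall i, 'M[S]_(r i.-1, r i)) (i : nat) : 'M[S]_(r i.-1, r i) :=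
  \matrix_(a, b) (if (a \in kept Z A i.-1) && (b \in kept Z A i)
                  then zsub Z (A i a b) else 0).

(* T = S/(Z) is modelled by the subring of polynomials not involving the
   variables of Z (those fixed by zsub); S/I (x) T = T / (image of I). *)
Definition Tring (Z : {set 'I_n}) (p : S) : Prop := zsub Z p = p.
Definition Tideal (Z : {set 'I_n}) (k : nat) (g : 'I_k -> 'X_{1..n}) (q : S)
  : Prop := exists p, monomial_ideal g p /\ zsub Z p = q.

End Pruning.

(* Main.v *)
Require Import Defs.
From HB Require Import structures.
From mathcomp Require Import all_boot all_algebra.
From mathcomp Require Import mpoly.
From mathcomp Require Import zify.
Set Implicit Arguments. Unset Strict Implicit. Unset Printing Implicit Defensive.
Import GRing.Theory.
Local Open Scope ring_scope.

Section Zsub.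
Variables (R : comNzRingType) (n : nat) (Z : {set 'I_n}).
Local Notation S := {mpoly R[n]}.

Lemma zsub0 : zsub Z (0 : S) = 0.
Proof. by rewrite /zsub comp_mpoly0. Qed.
Lemma zsubD (p q : S) : zsub Z (p + q) = zsub Z p + zsub Z q.
Proof. by rewrite /zsub comp_mpolyD. Qed.
Lemma zsubM (p q : S) : zsub Z (p * q) = zsub Z p * zsub Z q.
Proof. by rewrite /zsub rmorphM. Qed.
Lemma zsub_sum (I : finType) (F : I -> S) :
  zsub Z (\sum_i F i) = \sum_i zsub Z (F i).
Proof. by rewrite /zsub raddf_sum. Qed.

Definition zfree (m : 'X_{1..n}) := [forall j, (j \in Z) ==> (m j == 0%N)].

Lemma zsubZX (c : R) (m : 'X_{1..n}) :
  zsub Z (c *: 'X_[m]) = if zfree m then c *: 'X_[m] else 0.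
Proof.
rewrite /zsub comp_mpolyZ comp_mpolyX.
case: ifP => [/forallP H|/negbT].
  congr (_ *: _); rewrite [RHS]mpolyXE_id; apply: eq_bigr => i _.
  rewrite tnth_mktuple; case: ifP => // iZ.
  by have := H i; rewrite iZ /= => /eqP ->; rewrite !expr0.
rewrite negb_forall => /existsP [j]; rewrite negb_imply => /andP [jZ mj].
rewrite (bigD1 j) //= tnth_mktuple jZ expr0n (negbTE mj) mul0r scaler0 //.
Qed.

Lemma zsub_sumseq (s : seq 'X_{1..n}) (F : 'X_{1..n} -> S) :
  zsub Z (\sum_(m <- s) F m) = \sum_(m <- s) zsub Z (F m).
Proof. by rewrite /zsub (raddf_sum (comp_mpoly _)). Qed.

Lemma zsubE (q : S) : zsub Z q =
  \sum_(m <- msupp q) (if zfree m then q@_m *: 'X_[m] else 0).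
Proof.
rewrite {1}(mpolyE q) zsub_sumseq; apply: eq_bigr => m _; exact: zsubZX.
Qed.

Lemma zsubK (p : S) : zsub Z (zsub Z p) = zsub Z p.
Proof.
rewrite [zsub Z p]zsubE zsub_sumseq; apply: eq_bigr => m _.
by case: ifP => h; [rewrite zsubZX h | exact: zsub0].
Qed.
End Zsub.

Section Main.
Unset Implicit Arguments.
Variables (K : comNzRingType) (n k : nat) (g : 'I_k -> 'X_{1..n})
  (t : nat) (r : nat -> nat)
  (A : forall i, 'M[{mpoly K[n]}]_(r i.-1, r i))
  (deg : forall i, 'I_(r i) -> 'X_{1..n}) (Z : {set 'I_n}).
Set Implicit Arguments.
Local Notation S := {mpoly K[n]}.
Hypothesis Hmg : multigraded t deg A.
Hypothesis Hr0 : r 0 = 1%N.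
Hypothesis Hrt : r t.+1 = 0%N.
Hypothesis Hcx : forall i, (1 <= i <= t)%N -> A i *m A i.+1 = 0.
Hypothesis Hex0 : forall p : S, True -> (monomial_ideal g p <->
   exists v, supported [set: 'I_(r 1)] (fun _ => True) v /\
             forall a, (A 1%N *m v) a 0 = p).
Hypothesis Hex : forall i, (1 <= i <= t)%N -> forall v,
   supported [set: 'I_(r i)] (fun _ => True) v ->
   A i *m v = 0 -> exists w, supported [set: 'I_(r i.+1)] (fun _ => True) w
                             /\ A i.+1 *m w = v.
Hypothesis Hmin : forall i, (1 <= i <= t)%N -> forall a b, (A i a b)@_0%MM = 0.

Lemma ord0_uniq (x y : 'I_(r 0)) : x = y.
Proof.
apply: val_inj; have hx := ltn_ord x; have hy := ltn_ord y.
have h : forall m : nat, (m < r 0)%N -> m = 0%N by move=> m; rewrite Hr0; lia.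
by rewrite /= (h _ hx) (h _ hy).
Qed.

Definition a0 : 'I_(r 0) := cast_ord (esym Hr0) ord0.

Lemma nzcol i (Hi : (1 <= i <= t)%N) (b : 'I_(r i)) : exists a, A i a b != 0.
Proof.
case: (boolP [exists a, A i a b != 0]) => [/existsP //|].
rewrite negb_exists => /forallP H0.
pose v : 'cV[S]_(r i) := \col_j (if j == b then 1 else 0).
have Av : A i *m v = 0.
  apply/matrixP => a c; rewrite !mxE (bigD1 b) //= big1 ?addr0.
    by rewrite mxE eqxx mulr1; have := H0 a; rewrite negbK => /eqP.
  by move=> j /negbTE hj; rewrite mxE hj mulr0.
have sv : supported [set: 'I_(r i)] (fun _ => True) v.
  by move=> j; split=> //; rewrite in_setT.
have [w [_ Hw]] := Hex Hi sv Av.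
move/matrixP: Hw => /(_ b 0) /(congr1 (mcoeff 0%MM)).
rewrite /= !mxE eqxx mcoeff1 eqxx (raddf_sum (mcoeff 0%MM)) /= big1 => [|c _].
  by move/esym/eqP; rewrite oner_eq0.
have [lt|eq] : (i < t)%N \/ i = t by move: Hi; case/andP=> _; rewrite leq_eqVlt => /orP [/eqP|]; auto.
  by rewrite (rmorphM (mcoeff 0%MM)) /= Hmin ?mul0r // lt.
by subst i; have := ltn_ord c; rewrite [in X in (_ < X)%N -> _]Hrt.
Qed.

Definition good i (b : 'I_(r i)) :=
  forall (x : 'I_(r 0)) j, j \in Z -> deg i b j = deg 0 x j.
Definition lb i (b : 'I_(r i)) :=
  forall (x : 'I_(r 0)) j, (deg 0 x j <= deg i b j)%N.

Lemma inv i : (i <= t)%N -> forall b, lb b /\ (b \in kept Z A i <-> good b).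
Proof.
elim: i => [_ b|i IH Hi b].
  have e : forall x, x = b by move=> x; apply: ord0_uniq.
  split; first by move=> x j; rewrite (e x).
  by split=> _; [move=> x j _; rewrite (e x) | rewrite /= in_setT].
have Hi1 : (1 <= i.+1 <= t)%N by rewrite Hi.
have [a Ha] := nzcol Hi1 b.
case: (Hmg Hi1 a b) => [E|[c [m [Hab Hdeg]]]]; first by rewrite E eqxx in Ha.
simpl in Hdeg.
have [lba ka] := IH (ltnW Hi) a.
have Hd : forall j, deg i.+1 b j = (m j + deg i a j)%N.
  by move=> j; rewrite -Hdeg mnmDE.
split.
  by move=> x j; rewrite Hd; apply: leq_trans (lba x j) (leq_addl _ _).
rewrite inE; split.
  case/existsP => a' /andP [ka' nz'].
  have [lba' ka'b] := IH (ltnW Hi) a'.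
  have ga' := ka'b.1 ka'.
  case: (Hmg Hi1 a' b) => [E|[c' [m' [H1 H2]]]]; first by rewrite E zsub0 eqxx in nz'.
  move: nz'; rewrite H1 zsubZX; case: ifP => [/forallP zf _|]; last by rewrite eqxx.
  move=> x j jZ; rewrite -H2 mnmDE.
  by have := zf j; rewrite jZ /= => /eqP ->; rewrite add0n; apply: ga'.
move=> gb; apply/existsP; exists a.
have gd : forall j, j \in Z -> m j = 0%N /\ deg i a j = deg 0 a0 j.
  move=> j jZ; have := gb a0 j jZ; rewrite Hd => e; have := lba a0 j; lia.
have ga : good a.
  by move=> x j jZ; rewrite (ord0_uniq x a0); apply: (gd j jZ).2.
rewrite (ka.2 ga) /= Hab zsubZX.
have -> : zfree Z m.
  by apply/forallP => j; apply/implyP => jZ; rewrite (gd j jZ).1.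
by rewrite -Hab.
Qed.

Lemma colEq i' (Hi : (1 <= i'.+1 <= t)%N) (b : 'I_(r i'.+1))
  (kb : b \in kept Z A i'.+1) (a : 'I_(r i')) : pruned Z A i'.+1 a b = A i'.+1 a b.
Proof.
rewrite mxE /=.
case: (Hmg Hi a b) => [E|[c [m [Hab Hdeg]]]].
  by rewrite E zsub0; case: ifP.
simpl in Hdeg.
have Hit : (i'.+1 <= t)%N by case/andP: Hi.
have gb := (inv Hit b).2.1 kb.
have [lba ka] := inv (ltnW Hit) a.
have gd : forall j, j \in Z -> m j = 0%N /\ deg i' a j = deg 0 a0 j.
  move=> j jZ; have := gb a0 j jZ; rewrite -Hdeg mnmDE => e; have := lba a0 j; lia.
have ga : good a.
  by move=> x j jZ; rewrite (ord0_uniq x a0); apply: (gd j jZ).2.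
rewrite (ka.2 ga) kb /= Hab zsubZX.
have -> : zfree Z m.
  by apply/forallP => j; apply/implyP => jZ; rewrite (gd j jZ).1.
by [].
Qed.

Lemma prune_mul i' (a : 'I_(r i')) (Ha : a \in kept Z A i')
  (f : 'I_(r i'.+1) -> S) :
  \sum_b pruned Z A i'.+1 a b * (if b \in kept Z A i'.+1 then zsub Z (f b) else 0)
  = zsub Z (\sum_b A i'.+1 a b * f b).
Proof.
rewrite zsub_sum; apply: eq_bigr => b _; rewrite mxE /= Ha zsubM.
case kb: (b \in kept Z A i'.+1) => /=; first by [].
rewrite mul0r; move/negbT: kb; rewrite inE negb_exists => /forallP /(_ a).
by rewrite Ha /= negbK => /eqP ->; rewrite mul0r.
Qed.

Lemma main_res : is_min_free_res (Tring Z) (Tideal Z g) t (kept Z A) (pruned Z A).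
Proof.
split.
- by split.
- move=> i Hi a b; split.
    by rewrite /Tring mxE; case: ifP => _; [exact: zsubK | exact: zsub0].
  rewrite mxE => H; case: ifP => // /andP [h1 h2]; by move: H; rewrite h1 h2.
- move=> i Hi; case: i Hi => [//|i'] Hi.
  apply/matrixP => a c; rewrite [LHS]mxE [RHS]mxE.
  case ka: (a \in kept Z A i'); last first.
    by apply: big1 => b _; rewrite mxE /= ka /= mul0r.
  case kc: (c \in kept Z A i'.+2); last first.
    by apply: big1 => b _; rewrite [pruned _ _ _ b c]mxE /= kc andbF mulr0.
  rewrite (eq_bigr (fun b => pruned Z A i'.+1 a b *
     (if b \in kept Z A i'.+1 then zsub Z (A i'.+2 b c) else 0))); last first.
    by move=> b _; rewrite [pruned _ _ _ b c]mxE /= kc andbT.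
  rewrite prune_mul //.
  move/matrixP: (Hcx Hi) => /(_ a c); rewrite !mxE => ->; exact: zsub0.
- split.
  + move=> p Tp; split.
      case=> q [Iq zq]. have [v [_ Hv]] := (Hex0 q I).1 Iq.
      exists (\col_j (if j \in kept Z A 1 then zsub Z (v j 0) else 0)); split.
        move=> j; rewrite mxE; split; last by move/negbTE ->.
        by rewrite /Tring; case: ifP => _; [exact: zsubK | exact: zsub0].
      move=> a; rewrite mxE.
      rewrite (eq_bigr (fun b => pruned Z A 1 a b *
        (if b \in kept Z A 1 then zsub Z (v b 0) else 0))); last first.
        by move=> b _; congr (_ * _); rewrite mxE.
      rewrite (@prune_mul 0 a (in_setT a)) -zq; congr (zsub Z _).
      by rewrite -(Hv a) mxE.
    case=> v [sv Hv]; exists ((A 1 *m v) a0 0); split.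
      apply/(Hex0 _ I).2; exists v; split.
        by move=> j; split=> //; rewrite in_setT.
      by move=> a; rewrite (ord0_uniq a a0).
    rewrite -(Hv a0) mxE [RHS]mxE -(@prune_mul 0 a0 (in_setT a0)).
    apply: eq_bigr => b _; congr (_ * _).
    case: ifP => kb; [by rewrite (sv b).1 | by rewrite (sv b).2 ?kb].
  + move=> i Hi v sv Hpv; case: i Hi v sv Hpv => [//|i'] Hi v sv Hpv.
    have Av : A i'.+1 *m v = 0.
      apply/matrixP => a c; rewrite (ord1 c).
      move/matrixP: Hpv => /(_ a 0) H.
      rewrite -H [LHS]mxE [RHS]mxE; apply: eq_bigr => b _.
      case kb: (b \in kept Z A i'.+1); first by rewrite colEq.
      by rewrite (sv b).2 ?kb ?mulr0.
    have sv' : supported [set: 'I_(r i'.+1)] (fun _ => True) v.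
      by move=> j; split=> //; rewrite in_setT.
    have [w [_ Hw]] := Hex Hi sv' Av.
    exists (\col_j (if j \in kept Z A i'.+2 then zsub Z (w j 0) else 0)); split.
      move=> j; rewrite mxE; split; last by move/negbTE ->.
      by rewrite /Tring; case: ifP => _; [exact: zsubK | exact: zsub0].
    apply/matrixP => a c; rewrite (ord1 c) mxE.
    rewrite (eq_bigr (fun b => pruned Z A i'.+2 a b *
        (if b \in kept Z A i'.+2 then zsub Z (w b 0) else 0))); last first.
      by move=> b _; congr (_ * _); rewrite mxE.
    case ka: (a \in kept Z A i'.+1).
      rewrite prune_mul //; move/matrixP: Hw => /(_ a 0); rewrite mxE => ->.
      exact: (sv a).1.
    rewrite big1 ?(sv a).2 ?ka // => b _; by rewrite mxE /= ka mul0r.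
- move=> i; case: i => [//|i'] Hi a b.
  case kb: (b \in kept Z A i'.+1); first by rewrite colEq // Hmin.
  by rewrite mxE kb andbF mcoeff0.
Qed.
End Main.

Theorem mainTheorem2 :
  forall (K : idomainType),
  (* K is a field, or K is (isomorphic to) Z *)
  ((forall x : K, x != 0 -> x \is a GRing.unit) \/
   (exists f : {rmorphism int -> K}, bijective f)) ->
  forall (n k : nat) (g : 'I_k -> 'X_{1..n})
         (t : nat) (r : nat -> nat)
         (A : forall i, 'M[{mpoly K[n]}]_(r i.-1, r i))
         (deg : forall i, 'I_(r i) -> 'X_{1..n}),
  multigraded t deg A ->
  is_min_free_res (fun _ => True) (monomial_ideal g) t (fun i => setT) A ->
  forall Z : {set 'I_n},
  is_min_free_res (Tring Z) (Tideal Z g) t (kept Z A) (pruned Z A).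
Proof.
move=> K _ n k g t r A deg Hmg HA Z.
case: HA => [[Hr0 _ Hrt] _ Hcx [Hex0 Hex] Hmin].
exact: (@main_res K n k g t r A deg Z Hmg Hr0 Hrt Hcx Hex0 Hex Hmin).
Qed.
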